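(* Let $n\ge1$, $d\ge2$, $t\ge1$, and let $\{h_\alpha\}$ be a finite family of Hermitian operators on $(\mathbb C^d)^{\otimes n}$ each of which satisfies $U^{\otimes n}h_\alpha (U^* )^{\otimes n}=h_\alpha$ for all $U\in U(d)$. Then for every degree-$2t$ pseudo-density matrix $\tilde\rho$ (in particular every density matrix, which is the case $t=n$) there is a degree-$2t$ pseudo-density matrix $\tilde\rho'$ (a density matrix if $\tilde\rho$ is one) such that $\operatorname{tr}(\tilde\rho'\Lambda^a_u)=0$ for all $a\in[d^2-1]$ and $u\in[n]$, and $\operatorname{tr}(\tilde\rho' h_\alpha)=\operatorname{tr}(\tilde\rho h_\alpha)$ for every $\alpha$.
   Context: $\Lambda^1,\dots,\Lambda^{d^2-1}$ are the generalized Gell-Mann matrices ($|a\rangle\langle b|+|b\rangle\langle a|$, $-i|a\rangle\langle b|+i|b\rangle\langle a|$ for $a<b$, and $\sqrt{\frac{2}{a(a+1)}}(\sum_{b\le a}|b\rangle\langle b|-a|a+1\rangle\langle a+1|)$ for $1\le a\le d-1$), and $\Lambda^0=\sqrt{2/d}\,I$. $\Lambda^a_u$ denotes $\Lambda^a$ acting on qudit $u$ tensored with identity elsewhere. The products $\Lambda^{a_1}\otimes\cdots\otimes\Lambda^{a_n}$, $a_i\in\{0,\dots,d^2-1\}$, form a basis of operators on $(\mathbb C^d)^{\otimes n}$; the degree of such a basis element is the number of $i$ with $a_i\ne0$, and the degree of an operator is the maximum degree of basis elements with nonzero coefficient in its expansion. A degree-$2t$ pseudo-density matrix is an operator $\tilde\rho$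 on $(\mathbb C^d)^{\otimes n}$ with $\tilde\rho^*=\tilde\rho$, $\operatorname{tr}\tilde\rho=1$, and $\operatorname{tr}(\tilde\rho A^*A)\ge0$ for every operator $A$ of degree at most $t$. *)

(* Defs.v *)
From mathcomp Require Import all_boot all_order all_algebra.
From mathcomp Require Import reals complex.
Set Implicit Arguments.
Unset Strict Implicit.
Unset Printing Implicit Defensive.
Import Order.TTheory GRing.Theory Num.Theory.
Local Open Scope ring_scope.

Section QuditOps.
Variables (R : realType) (n d : nat).
Local Notation C := (R[i]).

(* computational basis states of (C^d)^{⊗ n}: one value in [0,d) per qudit *)
Definition cfg := {ffun 'I_n -> 'I_d}.

(* operators on (C^d)^{⊗ n}, as matrices indexed by basis states *)
Definition op := cfg -> cfg -> C.

Definition opmul (A B : op) : op := fun x y => \sum_(z : cfg) A x z * B z y.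
Definition opadj (A : op) : op := fun x y => (A y x)^*.
Definition optr (A : op) : C := \sum_(x : cfg) A x x.
Definition op_hermitian (A : op) : Prop := forall x y, opadj A x y = A x y.

Definition adjmx (U : 'M[C]_d) : 'M[C]_d := \matrix_(i, j) (U j i)^*.
Definition unitary_mx (U : 'M[C]_d) : Prop := U *m adjmx U = 1%:M.

Definition tensprod (M : 'I_n -> 'M[C]_d) : op :=
  fun x y => \prod_(i < n) M i (x i) (y i).

Definition tenspow (U : 'M[C]_d) : op := tensprod (fun _ => U).

(* Generalized Gell-Mann matrices, labelled by pairs (j,k) of 0-based indices:
   - j < k : |j><k| + |k><j|                      (symmetric)
   - j > k : -i|k><j| + i|j><k|                   (antisymmetric, a=k<b=j)
   - j = k = 0 : Lambda^0 = sqrt(2/d) I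
   - j = k = a >= 1 : sqrt(2/(a(a+1))) (sum_{x<a} |x><x| - a |a><a|)
     (this is the paper's diagonal matrix with 1-based index a, a+1 <-> 0-based a). *)
Definition gellmann (p : 'I_d * 'I_d) : 'M[C]_d :=
  let j := p.1 in let k := p.2 in
  \matrix_(x, y)
    if (j < k)%N then
      (if ((x == j) && (y == k)) || ((x == k) && (y == j)) then 1 else 0)
    else if (k < j)%N then
      (if (x == k) && (y == j) then - 'i
       else if (x == j) && (y == k) then 'i else 0)
    else if (nat_of_ord j == 0)%N then
      sqrtC (2 / d%:R) * (x == y)%:R
    else
      (x == y)%:R * sqrtC (2 / (j * j.+1)%N%:R) *
      (if (x < j)%N then 1 else if (nat_of_ord x == j) then - (j%:R) else 0).

Definition is_id_label (p : 'I_d * 'I_d) : bool :=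
  (nat_of_ord p.1 == 0)%N && (nat_of_ord p.2 == 0)%N.

Definition label := {ffun 'I_n -> 'I_d * 'I_d}.

Definition basis_el (f : label) : op := tensprod (fun i => gellmann (f i)).

Definition label_deg (f : label) : nat := #|[set i | ~~ is_id_label (f i)]|.

(* an operator has degree at most t iff in its expansion in the
   (Gell-Mann product) basis only basis elements of degree <= t have nonzero
   coefficient (the expansion is unique since these form a basis) *)
Definition deg_le (A : op) (t : nat) : Prop :=
  exists c : label -> C,
    (forall f, c f != 0 -> (label_deg f <= t)%N) /\
    (forall x y, A x y = \sum_(f : label) c f * basis_el f x y).

Definition is_pseudo_density (t : nat) (rho : op) : Prop :=
  [/\ op_hermitian rho, optr rho = 1 &
      forall A : op, deg_le A t -> 0 <= optr (opmul rho (opmul (opadj A) A))].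

Definition is_density (rho : op) : Prop :=
  [/\ op_hermitian rho, optr rho = 1 &
      forall v : cfg -> C, 0 <= \sum_(x : cfg) \sum_(y : cfg) (v x)^* * rho x y * v y].

Definition local_gm (a : 'I_d * 'I_d) (u : 'I_n) : op :=
  tensprod (fun i => if i == u then gellmann a else 1%:M).

End QuditOps.

(* Main.v *)
Require Import Defs.
From mathcomp Require Import all_boot all_order all_algebra.
From mathcomp Require Import reals complex.
From mathcomp Require Import ring.
From Stdlib Require Import FunctionalExtensionality.
Import Order.TTheory GRing.Theory Num.Theory.
Local Open Scope ring_scope.
Set Implicit Arguments.
Unset Strict Implicit.

Section OpAlg.
Variables (R : realType) (n d : nat).
Local Notation C := (R[i]).
Local Notation op := (op R n d).
Local Notation cfg := (cfg n d).

Definition opid : op := fun x y => (x == y)%:R.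

Lemma opmulA (A B D : op) x y :
  opmul (opmul A B) D x y = opmul A (opmul B D) x y.
Proof.
rewrite /opmul; under eq_bigr do rewrite mulr_suml.
rewrite exchange_big; apply: eq_bigr => z _; rewrite mulr_sumr.
by apply: eq_bigr => w _; rewrite mulrA.
Qed.

Lemma opmul_ext (A A' B B' : op) x y :
  (forall x y, A x y = A' x y) -> (forall x y, B x y = B' x y) ->
  opmul A B x y = opmul A' B' x y.
Proof. by move=> eA eB; rewrite /opmul; apply: eq_bigr => z _; rewrite eA eB. Qed.

Lemma opmul1 (A : op) x y : opmul A opid x y = A x y.
Proof.
rewrite /opmul (bigD1 y) //= big1 ?addr0 /opid ?eqxx ?mulr1 // => z /negbTE.
by rewrite eq_sym => ->; rewrite mulr0.
Qed.

Lemma opmul1l (A : op) x y : opmul opid A x y = A x y.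
Proof.
rewrite /opmul (bigD1 x) //= big1 ?addr0 /opid ?eqxx ?mul1r // => z /negbTE.
by rewrite eq_sym => ->; rewrite mul0r.
Qed.

Lemma optrC (A B : op) : optr (opmul A B) = optr (opmul B A).
Proof. by rewrite /optr /opmul exchange_big; apply: eq_bigr => x _; apply: eq_bigr => y _; rewrite mulrC. Qed.

Lemma optr_ext (A B : op) : (forall x y, A x y = B x y) -> optr A = optr B.
Proof. by move=> e; rewrite /optr; apply: eq_bigr => x _; rewrite e. Qed.

Lemma opadj_mul (A B : op) x y : opadj (opmul A B) x y = opmul (opadj B) (opadj A) x y.
Proof.
rewrite /opadj /opmul rmorph_sum; apply: eq_bigr => z _.
by rewrite rmorphM mulrC.
Qed.

Lemma opadjK (A : op) x y : opadj (opadj A) x y = A x y.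
Proof. by rewrite /opadj conjCK. Qed.

Lemma tensprod_mul (M N : 'I_n -> 'M[C]_d) x y :
  opmul (tensprod M) (tensprod N) x y = tensprod (fun i => M i *m N i) x y.
Proof.
rewrite /opmul /tensprod.
under [RHS]eq_bigr do rewrite mxE.
rewrite bigA_distr_bigA /=; apply: eq_bigr => z _.
by rewrite -big_split.
Qed.

Lemma tensprod_adj (M : 'I_n -> 'M[C]_d) x y :
  opadj (tensprod M) x y = tensprod (fun i => adjmx (M i)) x y.
Proof.
rewrite /opadj /tensprod rmorph_prod; apply: eq_bigr => i _.
by rewrite mxE.
Qed.

Lemma tensprod1 x y : tensprod (fun _ => (1%:M : 'M[C]_d)) x y = opid x y.
Proof.
rewrite /tensprod /opid.
under eq_bigr do rewrite mxE.
have [->|nxy] := eqVneq x y; first by rewrite big1 // => i _; rewrite eqxx.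
have [i ni] : exists i, x i != y i.
  apply/existsP; apply: contraR nxy => /existsPn H; apply/eqP/ffunP => i.
  by apply/eqP; move: (H i); rewrite negbK.
by rewrite (bigD1 i) //= (negbTE ni) mul0r.
Qed.

Lemma tensprod_ext (M N : 'I_n -> 'M[C]_d) x y :
  (forall i, M i = N i) -> tensprod M x y = tensprod N x y.
Proof. by move=> e; rewrite /tensprod; apply: eq_bigr => i _; rewrite e. Qed.
End OpAlg.
Arguments opid {R n d}.

Lemma sum_delta (T : finType) (K : nzRingType) (c : T) (F : T -> K) :
  \sum_(a : T) (a == c)%:R * F a = F c.
Proof.
rewrite (bigD1 c) //= big1 ?addr0 ?eqxx ?mul1r // => a /negbTE ->.
by rewrite mul0r.
Qed.

Lemma sum_delta_r (T : finType) (K : nzRingType) (c : T) (F : T -> K) :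
  \sum_(a : T) F a * (a == c)%:R = F c.
Proof.
rewrite (bigD1 c) //= big1 ?addr0 ?eqxx ?mulr1 // => a /negbTE ->.
by rewrite mulr0.
Qed.

Section Unit.
Variables (R : realType) (n d : nat).
Local Notation C := (R[i]).
Local Notation op := (op R n d).

Lemma adjmxK (U : 'M[C]_d) : adjmx (adjmx U) = U.
Proof. by apply/matrixP => i j; rewrite !mxE conjCK. Qed.

Lemma unitary_adj (U : 'M[C]_d) : unitary_mx U -> adjmx U *m U = 1%:M.
Proof. exact: mulmx1C. Qed.

Lemma unitary_adjmx (U : 'M[C]_d) : unitary_mx U -> unitary_mx (adjmx U).
Proof. by move=> uU; rewrite /unitary_mx adjmxK unitary_adj. Qed.

Lemma tenspow_unit (U : 'M[C]_d) (x y : cfg n d) : unitary_mx U ->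
  opmul (tenspow U) (tenspow (adjmx U)) x y = opid x y.
Proof.
move=> uU; rewrite tensprod_mul -(@tensprod1 R n d).
by apply: tensprod_ext => i; rewrite uU.
Qed.

Lemma tenspow_unit' (U : 'M[C]_d) (x y : cfg n d) : unitary_mx U ->
  opmul (tenspow (adjmx U)) (tenspow U) x y = opid x y.
Proof.
move=> uU; rewrite tensprod_mul -(@tensprod1 R n d).
by apply: tensprod_ext => i; rewrite unitary_adj.
Qed.

Lemma tenspow_adj (U : 'M[C]_d) (x y : cfg n d) :
  tenspow (adjmx U) x y = (tenspow U y x)^*.
Proof. by rewrite -[RHS]/(opadj _ x y) tensprod_adj. Qed.

End Unit.

Section Twirl.
Variables (R : realType) (n d : nat) (K : finType).
Local Notation C := (R[i]).
Local Notation op := (op R n d).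
Variables (U : K -> 'M[C]_d) (rho : op).
Hypothesis hU : forall k, unitary_mx (U k).

Definition W k : op := tenspow (U k).
Definition Wd k : op := tenspow (adjmx (U k)).
Definition conjop k : op := opmul (opmul (W k) rho) (Wd k).
Definition twirl : op := fun x y => (#|K|%:R)^-1 * \sum_k conjop k x y.

Lemma conj_tr k (B : op) :
  optr (opmul (conjop k) B) = optr (opmul rho (opmul (opmul (Wd k) B) (W k))).
Proof.
rewrite /conjop.
rewrite (optr_ext (B := opmul (opmul (W k) rho) (opmul (Wd k) B))); last first.
  by move=> x y; rewrite opmulA.
rewrite optrC (optr_ext (B := opmul (opmul (opmul (Wd k) B) (W k)) rho)); last first.
  by move=> x y; rewrite -opmulA.
by rewrite optrC.
Qed.

Lemma twirl_tr (B : op) :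
  optr (opmul twirl B) = (#|K|%:R)^-1 * \sum_k optr (opmul rho (opmul (opmul (Wd k) B) (W k))).
Proof.
transitivity ((#|K|%:R)^-1 * \sum_k optr (opmul (conjop k) B)); last first.
  by congr (_ * _); apply: eq_bigr => k _; rewrite conj_tr.
rewrite /optr /opmul /twirl.
under eq_bigr => x _ do under eq_bigr => z _ do rewrite -mulrA mulr_suml.
under eq_bigr do rewrite -mulr_sumr.
rewrite -mulr_sumr; congr (_ * _).
under eq_bigr do rewrite exchange_big.
by rewrite exchange_big.
Qed.


Lemma opadj_W k x y : opadj (W k) x y = Wd k x y.
Proof. by rewrite /W /Wd tensprod_adj. Qed.

Lemma opadj_Wd k x y : opadj (Wd k) x y = W k x y.
Proof. by rewrite /W /Wd tensprod_adj; apply: tensprod_ext => i; rewrite adjmxK. Qed.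

Lemma conjop_herm k x y : op_hermitian rho -> opadj (conjop k) x y = conjop k x y.
Proof.
move=> hr; rewrite /conjop opadj_mul.
rewrite (@opmul_ext _ _ _ _ (W k) _ (opmul (opadj rho) (opadj (W k)))); last 2 first.
- exact: opadj_Wd.
- by move=> a b; rewrite opadj_mul.
rewrite -opmulA; apply: opmul_ext => // a b.
  by apply: opmul_ext => // a' b'; rewrite hr.
by rewrite opadj_W.
Qed.

Lemma Kcard_conj (z : C) : ((#|K|%:R)^-1 * z)^* = (#|K|%:R)^-1 * z^*.
Proof. by rewrite rmorphM fmorphV rmorph_nat. Qed.

Lemma twirl_herm : op_hermitian rho -> op_hermitian twirl.
Proof.
move=> hr x y; rewrite /opadj /twirl Kcard_conj rmorph_sum; congr (_ * _).
by apply: eq_bigr => k _; exact: conjop_herm.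
Qed.

Lemma optr_id (A : op) : optr A = optr (opmul A opid).
Proof. by apply: optr_ext => x y; rewrite opmul1. Qed.

Hypothesis K0 : (0 < #|K|)%N.
Lemma twirl_trace : optr rho = 1 -> optr twirl = 1.
Proof.
move=> tr1; rewrite optr_id twirl_tr.
have key k : optr (opmul rho (opmul (opmul (Wd k) opid) (W k))) = 1.
  rewrite -tr1; apply: optr_ext => x y.
  rewrite -[RHS]opmul1; apply: opmul_ext => // a b.
  rewrite (@opmul_ext _ _ _ _ (Wd k) _ (W k)) ?tenspow_unit' // => a' b'.
  by rewrite opmul1.
under eq_bigr do rewrite key.
by rewrite sumr_const cardT -cardE mulVf // pnatr_eq0 -lt0n.
Qed.


Definition Pv (v : cfg n d -> C) : op := fun z w => v z * (v w)^*.

Lemma quad_tr (M : op) v :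
  \sum_x \sum_y (v x)^* * M x y * v y = optr (opmul M (Pv v)).
Proof.
rewrite /optr /opmul /Pv; apply: eq_bigr => x _; apply: eq_bigr => y _; ring.
Qed.

Lemma conj_P k v x y :
  opmul (opmul (Wd k) (Pv v)) (W k) x y = Pv (fun z => \sum_a Wd k z a * v a) x y.
Proof.
rewrite /opmul /Pv rmorph_sum mulr_sumr; apply: eq_bigr => b _.
rewrite !mulr_suml; apply: eq_bigr => a _.
have -> : W k b y = (Wd k y b)^*.
  by rewrite /Wd /W tenspow_adj conjCK.
by rewrite rmorphM /=; ring.
Qed.

Lemma twirl_density : is_density rho -> is_density twirl.
Proof.
move=> [hr tr1 pos]; split.
- exact: twirl_herm.
- exact: twirl_trace.
move=> v; rewrite quad_tr twirl_tr; apply: mulr_ge0.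
  by rewrite invr_ge0 ler0n.
apply: sumr_ge0 => k _.
rewrite (@optr_ext _ _ _ _ (opmul rho (Pv (fun z => \sum_a Wd k z a * v a)))).
  by rewrite -quad_tr.
by move=> x y; apply: opmul_ext => // a b; rewrite conj_P.
Qed.


Lemma opext (A B : op) : (forall x y, A x y = B x y) -> A = B.
Proof. by move=> e; apply: functional_extensionality => x; apply: functional_extensionality => y. Qed.

Lemma opmulA' (A B D : op) : opmul (opmul A B) D = opmul A (opmul B D).
Proof. by apply: opext => x y; rewrite opmulA. Qed.

Lemma W_Wd k : opmul (W k) (Wd k) = opid.
Proof. by apply: opext => x y; rewrite tenspow_unit. Qed.

Lemma Wd_W k : opmul (Wd k) (W k) = opid.
Proof. by apply: opext => x y; rewrite tenspow_unit'. Qed.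

Lemma opmul1' (A : op) : opmul A opid = A.
Proof. by apply: opext => x y; rewrite opmul1. Qed.

Lemma opmul1l' (A : op) : opmul opid A = A.
Proof. by apply: opext => x y; rewrite opmul1l. Qed.

Lemma opadj_mul' (A B : op) : opadj (opmul A B) = opmul (opadj B) (opadj A).
Proof. by apply: opext => x y; rewrite opadj_mul. Qed.

Lemma twirl_inv (hh : op) :
  (forall V, unitary_mx V -> forall x y,
     opmul (opmul (tenspow V) hh) (tenspow (adjmx V)) x y = hh x y) ->
  optr (opmul twirl hh) = optr (opmul rho hh).
Proof.
move=> Hh; rewrite twirl_tr.
have e k : opmul (opmul (Wd k) hh) (W k) = hh.
  apply: opext => x y; rewrite -(Hh _ (unitary_adjmx (hU k)) x y) adjmxK //.
under eq_bigr do rewrite e.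
have nK : (#|K|%:R : C) != 0 by rewrite pnatr_eq0 -lt0n.
rewrite sumr_const cardT -cardE -[X in _ * X]mulr_natl mulrA mulVf ?mul1r //.
Qed.

Lemma twirl_psd (t : nat) :
  (forall k (A : op), deg_le A t -> deg_le (opmul (opmul (Wd k) A) (W k)) t) ->
  is_pseudo_density t rho -> is_pseudo_density t twirl.
Proof.
move=> DL [hr tr1 pos]; split.
- exact: twirl_herm.
- exact: twirl_trace.
move=> A dA; rewrite twirl_tr; apply: mulr_ge0.
  by rewrite invr_ge0 ler0n.
apply: sumr_ge0 => k _.
set B := opmul (opmul (Wd k) A) (W k).
have -> : opmul (opmul (Wd k) (opmul (opadj A) A)) (W k) = opmul (opadj B) B.
  rewrite /B !opadj_mul' (opext (opadj_W k)) (opext (opadj_Wd k)).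
  rewrite !opmulA'; congr (opmul (Wd k) _); congr (opmul (opadj A) _).
  by rewrite -opmulA' W_Wd opmul1l'.
have := pos B (DL k A dA). exact.
Qed.

End Twirl.
Section GM.
Variables (R : realType) (d' : nat).
Local Notation d := d'.+2.
Local Notation C := (R[i]).
Local Notation gm := (gellmann R (d:=d)).

Definition inspan (M : 'M[C]_d) :=
  exists c : 'I_d * 'I_d -> C, M = \sum_q c q *: gm q.

Lemma inspan0 : inspan 0.
Proof. by exists (fun _ => 0); rewrite big1 // => q _; rewrite scale0r. Qed.

Lemma inspanD M N : inspan M -> inspan N -> inspan (M + N).
Proof.
move=> [c ->] [c' ->]; exists (fun q => c q + c' q).
by rewrite -big_split; apply: eq_bigr => q _; rewrite scalerDl.
Qed.

Lemma inspanZ a M : inspan M -> inspan (a *: M).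
Proof.
move=> [c ->]; exists (fun q => a * c q).
by rewrite scaler_sumr; apply: eq_bigr => q _; rewrite scalerA.
Qed.

Lemma inspanN M : inspan M -> inspan (- M).
Proof. by move=> h; rewrite -scaleN1r; apply: inspanZ. Qed.

Lemma inspanB M N : inspan M -> inspan N -> inspan (M - N).
Proof. by move=> h1 h2; apply: inspanD => //; apply: inspanN. Qed.

Lemma inspan_gm p : inspan (gm p).
Proof.
exists (fun q => (q == p)%:R); rewrite (bigD1 p) //= big1 ?addr0 ?eqxx ?scale1r //.
by move=> q /negbTE ->; rewrite scale0r.
Qed.

Lemma inspan_sum (I : finType) (F : I -> 'M[C]_d) :
  (forall i, inspan (F i)) -> inspan (\sum_i F i).
Proof.
move=> h; apply: (big_ind inspan) => //; [exact: inspan0 | exact: inspanD].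
Qed.

Lemma delta_lt (x y : 'I_d) : (x < y)%N ->
  delta_mx x y = 2^-1 *: (gm (x, y) + 'i *: gm (y, x)).
Proof.
move=> xy; have nxy : x != y by rewrite neq_ltn xy.
apply/matrixP => a b; rewrite !mxE /= xy ltnNge ltnW //=.
have nyx : y != x by rewrite eq_sym.
have two : (2 : C) != 0 by rewrite pnatr_eq0.
case: (eqVneq a x) => [->|ax].
  rewrite (negbTE nxy) /=; case: (eqVneq b y) => [_|nb] /=.
    by rewrite mulrN -expr2 sqrCi opprK mulVf.
  by rewrite mulr0 addr0 mulr0.
rewrite /=; case: (eqVneq a y) => [_|ay] /=.
  case: (eqVneq b x) => [_|nb] /=.
    by rewrite -expr2 sqrCi subrr mulr0.
  by rewrite mulr0 addr0 mulr0.
by rewrite mulr0 addr0 mulr0.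
Qed.

Lemma delta_gt (x y : 'I_d) : (y < x)%N ->
  delta_mx x y = 2^-1 *: (gm (y, x) - 'i *: gm (x, y)).
Proof.
move=> yx; have nxy : x != y by rewrite neq_ltn yx orbT.
have nyx : y != x by rewrite eq_sym.
apply/matrixP => a b; rewrite !mxE /= yx ltnNge ltnW //=.
case: (eqVneq a x) => [->|ax] /=.
  rewrite (negbTE nxy) /=; case: (eqVneq b y) => [_|nb] /=.
    by rewrite -expr2 sqrCi opprK mulVf // pnatr_eq0.
  by rewrite ?andbF mulr0 subr0 mulr0.
case: (eqVneq a y) => [_|ay] /=.
  case: (eqVneq b x) => [_|nb] /=.
    by rewrite mulrN -expr2 sqrCi opprK subrr mulr0.
  by rewrite mulr0 subr0 mulr0.
by rewrite mulr0 subr0 mulr0.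
Qed.

Definition Smx (m : nat) : 'M[C]_d := \matrix_(x, y) ((x == y) && (x < m)%N)%:R.
Definition Emx (m : nat) : 'M[C]_d :=
  \matrix_(x, y) ((x == y)%:R * (if (x < m)%N then 1 else if (nat_of_ord x == m) then - (m%:R) else 0)).

Lemma gm_diag m (Hm : (m < d)%N) : (0 < m)%N ->
  gm (Ordinal Hm, Ordinal Hm) = sqrtC (2 / (m * m.+1)%N%:R) *: Emx m.
Proof.
move=> m0; apply/matrixP => x y; rewrite !mxE /= ltnn eqn0Ngt m0 /=.
by rewrite mulrCA mulrA.
Qed.

Lemma inspanE m : (m < d)%N -> (0 < m)%N -> inspan (Emx m).
Proof.
move=> Hm m0; have -> : Emx m = (sqrtC (2 / (m * m.+1)%N%:R))^-1 *: gm (Ordinal Hm, Ordinal Hm).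
  rewrite gm_diag // scalerA mulVf ?scale1r //.
  rewrite sqrtC_eq0 mulf_neq0 ?invr_eq0 ?pnatr_eq0 //.
  by rewrite muln_eq0 negb_or -lt0n m0.
by apply: inspanZ; exact: inspan_gm.
Qed.

Lemma S_step m : (m < d)%N -> (0 < m)%N ->
  Smx m = (m.+1%:R)^-1 *: (Emx m + m%:R *: Smx m.+1).
Proof.
move=> Hm m0; apply/matrixP => x y; rewrite !mxE.
case: (eqVneq x y) => [_|nxy] /=; last by rewrite !mul0r mulr0 addr0 mulr0.
rewrite mul1r; case: (ltngtP x m) => [xm|mx|xm] /=.
- rewrite ltnS ltnW // mulr1 -[1 + _](natrD _ 1 m) add1n mulVf //.
  by rewrite pnatr_eq0.
- by rewrite ltnS leqNgt mx mulr0 addr0 mulr0.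
- by rewrite xm ltnSn mulr1 addNr mulr0.
Qed.

Lemma S_d : Smx d = 1%:M.
Proof. by apply/matrixP => x y; rewrite !mxE ltn_ord andbT. Qed.

Lemma S_0 : Smx 0 = 0.
Proof. by apply/matrixP => x y; rewrite !mxE andbF. Qed.

Lemma inspan1 : inspan 1%:M.
Proof.
have H0 : (0 < d)%N by [].
have -> : (1%:M : 'M[C]_d) = (sqrtC (2 / d%:R))^-1 *: gm (Ordinal H0, Ordinal H0).
  apply/matrixP => x y; rewrite !mxE /= mulrA mulVf ?mul1r //.
  by rewrite sqrtC_eq0 mulf_neq0 ?invr_eq0 ?pnatr_eq0.
by apply: inspanZ; exact: inspan_gm.
Qed.

Lemma inspanS k : (k <= d)%N -> inspan (Smx (d - k)).
Proof.
elim: k => [|k IH] kd; first by rewrite subn0 S_d; exact: inspan1.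
have [m0|m0] := posnP (d - k.+1); first by rewrite m0 S_0; exact: inspan0.
have md : (d - k.+1 < d)%N by rewrite ltn_subrL.
rewrite S_step //; apply: inspanZ; apply: inspanD; first exact: inspanE.
apply: inspanZ; have -> : ((d - k.+1).+1 = d - k)%N by rewrite subnSK.
exact: IH (ltnW kd).
Qed.

Lemma inspanSm m : (m <= d)%N -> inspan (Smx m).
Proof. by move=> md; rewrite -(subKn md); apply: inspanS; rewrite leq_subr. Qed.

Lemma delta_eq (x : 'I_d) : delta_mx x x = Smx x.+1 - Smx x.
Proof.
apply/matrixP => a b; rewrite !mxE.
case: (eqVneq a b) => [eab|nab] /=; last first.
  rewrite subrr; case: (eqVneq a x) => [eax|] //=; case: (eqVneq b x) => [ebx|] //=.
  by rewrite eax ebx eqxx in nab.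
rewrite eab andbb ltnS leq_eqVlt; rewrite -val_eqE /=; case: (ltngtP b x) => [bx|bx|bx] /=.
- by rewrite subrr.
- by rewrite subrr.
- by rewrite subr0.
Qed.

Lemma inspan_all (M : 'M[C]_d) : inspan M.
Proof.
rewrite (matrix_sum_delta M); apply: inspan_sum => a; apply: inspan_sum => b.
apply: inspanZ; case: (ltngtP a b) => [ab|ab|ab].
- by rewrite delta_lt //; apply: inspanZ; apply: inspanD; [exact: inspan_gm|apply: inspanZ; exact: inspan_gm].
- by rewrite delta_gt //; apply: inspanZ; apply: inspanB; [exact: inspan_gm|apply: inspanZ; exact: inspan_gm].
- have -> : b = a by apply: val_inj.
  rewrite delta_eq; apply: inspanB; apply: inspanSm; first exact: ltn_ord.
  exact: ltnW (ltn_ord a).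
Qed.

End GM.

Section Deg.
Variables (R : realType) (n d' : nat).
Local Notation d := d'.+2.
Local Notation C := (R[i]).
Local Notation gm := (gellmann R (d:=d)).
Local Notation op := (op R n d).

Lemma gm_id p : is_id_label p -> gm p = sqrtC (2 / d%:R) *: 1%:M.
Proof.
case: p => j k /andP [/eqP j0 /eqP k0]; apply/matrixP => x y.
by rewrite !mxE /= j0 k0 ltnn eqxx.
Qed.

Lemma coef_exists (U : 'M[C]_d) : unitary_mx U -> forall p,
  exists c : 'I_d * 'I_d -> C,
    adjmx U *m gm p *m U = \sum_q c q *: gm q /\
    (is_id_label p -> forall q, c q = (q == p)%:R).
Proof.
move=> uU p; case: (boolP (is_id_label p)) => idp.
  exists (fun q => (q == p)%:R); split => // .
  rewrite (bigD1 p) //= big1 ?addr0 ?eqxx ?scale1r; last first.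
    by move=> q /negbTE ->; rewrite scale0r.
  rewrite gm_id // -scalemxAr -scalemxAl mulmx1 unitary_adj //.
have [c hc] := inspan_all (adjmx U *m gm p *m U).
by exists c; split.
Qed.

Lemma opmul_lin (I : finType) (X Y : op) (c : I -> C) (B : I -> op) x y :
  opmul (opmul X (fun a b => \sum_f c f * B f a b)) Y x y
  = \sum_f c f * opmul (opmul X (B f)) Y x y.
Proof.
rewrite /opmul.
transitivity (\sum_z \sum_w \sum_f X x w * (c f * B f w z) * Y z y).
  apply: eq_bigr => z _; rewrite mulr_suml; apply: eq_bigr => w _.
  by rewrite mulr_sumr mulr_suml.
transitivity (\sum_f \sum_z \sum_w X x w * (c f * B f w z) * Y z y).
  by under eq_bigr do rewrite exchange_big; rewrite exchange_big.
apply: eq_bigr => f _; rewrite mulr_sumr; apply: eq_bigr => z _.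
rewrite mulr_suml mulr_sumr; apply: eq_bigr => w _; ring.
Qed.

Lemma deg_conj (U : 'M[C]_d) (t : nat) (A : op) : unitary_mx U ->
  deg_le A t -> deg_le (opmul (opmul (tenspow (adjmx U)) A) (tenspow U)) t.
Proof.
move=> uU [c [cdeg cA]].
have [cc hcc] := fin_all_exists (coef_exists uU).
pose P (f g : label n d) := \prod_i cc (f i) (g i).
exists (fun g => \sum_f c f * P f g); split.
  move=> g nz.
  case: (pickP (fun f => c f * P f g != 0)) => [f Hf | H]; last first.
    move: nz; rewrite big1 ?eqxx // => f _; move: (H f) => /negbFE /eqP.
    by [].
  move: Hf; rewrite mulf_eq0 negb_or => /andP [cf /prodf_neq0 Pf].
  apply: leq_trans (cdeg f cf); apply: subset_leq_card; apply/subsetP => i.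
  rewrite !inE; apply: contra => idf.
  move: (Pf i isT); rewrite (proj2 (hcc (f i)) idf) pnatr_eq0 eqb0 negbK.
  by move/eqP ->.
move=> x y.
have E1 f : opmul (opmul (tenspow (adjmx U)) (basis_el R f)) (tenspow U) x y
    = \sum_g P f g * basis_el R g x y.
  rewrite (@opmul_ext _ _ _ _ (tensprod (fun i => adjmx U *m gm (f i))) _ (tenspow U)) //;
    last by move=> a b; rewrite tensprod_mul.
  rewrite tensprod_mul /tensprod.
  under eq_bigr => i _ do rewrite (proj1 (hcc (f i))) summxE.
  rewrite bigA_distr_bigA /=; apply: eq_bigr => g _.
  rewrite /P /basis_el /tensprod -big_split /=; apply: eq_bigr => i _.
  by rewrite mxE.
transitivity (\sum_f c f * opmul (opmul (tenspow (adjmx U)) (basis_el R f)) (tenspow U) x y).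
  rewrite (@opmul_ext _ _ _ _ (opmul (tenspow (adjmx U)) (fun a b => \sum_f c f * basis_el R f a b)) _ (tenspow U)) //;
    last by move=> a b; apply: opmul_ext => // a' b'; rewrite cA.
  exact: opmul_lin.
under eq_bigr do rewrite E1 mulr_sumr.
rewrite exchange_big /=; apply: eq_bigr => g _.
by rewrite mulr_suml; apply: eq_bigr => f _; rewrite mulrA.
Qed.

End Deg.

Notation Kt d' := ({ffun 'I_(d'.+2) -> bool} * 'I_(d'.+2))%type.

Section Family.
Variables (R : realType) (d' : nat).
Local Notation d := d'.+2.
Local Notation C := (R[i]).
Local Notation gm := (gellmann R (d:=d)).

Definition sgn (s : {ffun 'I_d -> bool}) (b : 'I_d) : C := (-1) ^+ s b.
Definition Ufam (k : Kt d') : 'M[C]_d :=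
  \matrix_(a, b) ((a == b + k.2)%:R * sgn k.1 b).

Lemma conjM (x y : C) : (x * y)^* = x^* * y^*.
Proof. exact: rmorphM. Qed.

Lemma conjn (m : nat) : (m%:R : C)^* = m%:R.
Proof. exact: rmorph_nat. Qed.

Lemma sgn_conj s b : (sgn s b)^* = sgn s b.
Proof. by rewrite /sgn; case: (s b) => /=; rewrite ?expr1 ?expr0 ?rmorphN1 ?rmorph1. Qed.

Lemma sgn_sq s b : sgn s b * sgn s b = 1.
Proof. by rewrite /sgn; case: (s b); rewrite /= ?expr1 ?expr0 ?mulrNN ?mulr1. Qed.

Lemma eq_shift (x z k : 'I_d) : (x == z + k) = (z == x - k).
Proof. by rewrite [RHS]eq_sym subr_eq. Qed.

Lemma Ufam_unitary k : unitary_mx (Ufam k).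
Proof.
apply/matrixP => x y; rewrite !mxE.
under eq_bigr => z _ do rewrite !mxE eq_shift conjM sgn_conj.
under eq_bigr => z _ do rewrite conjn.
transitivity (\sum_z (z == x - k.2)%:R * (sgn k.1 z * ((y == z + k.2)%:R * sgn k.1 z))).
  by apply: eq_bigr => z _; ring.
rewrite sum_delta subrK mulrCA sgn_sq mulr1.
by rewrite eq_sym.
Qed.

Lemma conjU_entry k (M : 'M[C]_d) a b :
  (adjmx (Ufam k) *m M *m Ufam k) a b = sgn k.1 a * sgn k.1 b * M (a + k.2) (b + k.2).
Proof.
rewrite mxE.
under eq_bigr => j _ do rewrite !mxE eq_shift.
transitivity (\sum_j (j == b + k.2)%:R * (sgn k.1 b * (\sum_j0 (adjmx (Ufam k)) a j0 * M j0 j))).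
  by apply: eq_bigr => j _; rewrite -eq_shift; ring.
rewrite sum_delta.
under eq_bigr => i _ do rewrite !mxE eq_shift conjM sgn_conj conjn.
transitivity (sgn k.1 b * (\sum_i (i == a + k.2)%:R * (sgn k.1 a * M i (b + k.2)))).
  by congr (_ * _); apply: eq_bigr => i _; rewrite -eq_shift; ring.
by rewrite sum_delta; ring.
Qed.

Lemma sign_sum (a b : 'I_d) : a != b ->
  \sum_(s : {ffun 'I_d -> bool}) sgn s a * sgn s b = 0.
Proof.
move=> ab.
pose tau (s : {ffun 'I_d -> bool}) := [ffun z => if z == a then ~~ s z else s z].
have tauK : involutive tau.
  by move=> s; apply/ffunP => z; rewrite !ffunE; case: (z == a) => //; rewrite negbK.
set S := \sum_s _.
have hS : S = - S.
  rewrite {1}/S (reindex_inj (inv_inj tauK)) /= -sumrN; apply: eq_bigr => s _.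
  rewrite /sgn !ffunE eqxx eq_sym (negbTE ab).
  by case: (s a); rewrite /= ?expr0 ?expr1 ?mulNr ?opprK.
have : S *+ 2 == 0 by rewrite mulr2n {1}hS addNr.
by rewrite mulrn_eq0 /= => /eqP.
Qed.

Lemma trace_gm p : ~~ is_id_label p -> \sum_z gm p z z = 0.
Proof.
case: p => j k; rewrite /is_id_label /= => nid.
case: (ltngtP j k) => [jk|kj|ejk].
- apply: big1 => z _; rewrite mxE /= jk.
  have jk' : (j == k) = false by rewrite -val_eqE /= ltn_eqF.
  case: (eqVneq z j) => [->|nzj] /=; first by rewrite jk'.
  by rewrite andbF.
- apply: big1 => z _; rewrite mxE /= ltnNge (ltnW kj) /= kj.
  have jk' : (k == j) = false by rewrite -val_eqE /= ltn_eqF.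
  case: (eqVneq z k) => [->|nzk] /=; first by rewrite jk'.
  by rewrite andbF.
- have ejk' : j = k by apply: val_inj.
  subst k; rewrite andbb in nid.
  under eq_bigr => z _ do rewrite mxE /= ltnn (negbTE nid) eqxx mul1r.
  rewrite -mulr_sumr.
  have -> : \sum_(z : 'I_d) (if (z < j)%N then 1 else if nat_of_ord z == j then - (j%:R) else 0 : C)
      = \sum_(z : 'I_d) (z < j)%N%:R + \sum_(z : 'I_d) (z == j)%:R * - (j%:R).
    rewrite -big_split; apply: eq_bigr => z _ /=.
    case: (ltngtP z j) => [zj|zj|zj].
    + by rewrite -val_eqE /= (ltn_eqF zj) mul0r addr0.
    + by rewrite -val_eqE /= (gtn_eqF zj) mul0r addr0.
    + have -> : z = j by apply: val_inj.
      by rewrite eqxx mul1r add0r.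
  rewrite sum_delta.
  have -> : \sum_(z : 'I_d) (z < j)%N%:R = \sum_(z : 'I_d | (z < j)%N) (1 : C).
    by rewrite [RHS]big_mkcond /=; apply: eq_bigr => z _; case: ifP.
  rewrite (@big_ord_narrow _ 0 +%R j d (fun _ => 1 : C) (ltnW (ltn_ord j))) sumr_const card_ord.
  by rewrite subrr mulr0.
Qed.

Lemma family_sum (M : 'M[C]_d) (a b : 'I_d) : \sum_z M z z = 0 ->
  \sum_(k : Kt d') (adjmx (Ufam k) *m M *m Ufam k) a b = 0.
Proof.
move=> trM; under eq_bigr do rewrite conjU_entry.
rewrite -(pair_bigA _ (fun s j => sgn s a * sgn s b * M (a + j) (b + j))) /=.
case: (eqVneq a b) => [<-|ab].
  apply: big1 => s _; under eq_bigr do rewrite sgn_sq mul1r.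
  by move: trM; rewrite (reindex_inj (addrI a)) /=.
rewrite exchange_big /=; apply: big1 => j _.
by rewrite -mulr_suml sign_sum // mul0r.
Qed.

End Family.

Section Main.
Variables (R : realType) (n d' : nat).
Local Notation d := d'.+2.
Local Notation C := (R[i]).
Local Notation gm := (gellmann R (d:=d)).
Local Notation op := (op R n d).

Lemma Kt_pos : (0 < #|{: Kt d'}|)%N.
Proof. by apply/card_gt0P; exists ([ffun _ => false], ord0). Qed.

Lemma local_zero (rho : op) (a : 'I_d * 'I_d) (u : 'I_n) : ~~ is_id_label a ->
  optr (opmul (twirl (@Ufam R d') rho) (local_gm R a u)) = 0.
Proof.
move=> nid; rewrite twirl_tr.
set X := fun k => opmul (opmul (Wd (@Ufam R d') k) (local_gm R a u)) (W (@Ufam R d') k).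
have EX k x y : X k x y = (adjmx (Ufam R k) *m gm a *m Ufam R k) (x u) (y u) *
    \prod_(i | i != u) (1%:M : 'M[C]_d) (x i) (y i).
  rewrite /X (@opmul_ext _ _ _ _ (tensprod (fun i => adjmx (Ufam R k) *m (if i == u then gm a else 1%:M))) _ (W (@Ufam R d') k)) //;
    last by move=> x' y'; rewrite /Wd /local_gm tensprod_mul.
  rewrite /W tensprod_mul /tensprod (bigD1 u) //= eqxx; congr (_ * _).
  by apply: eq_bigr => i /negbTE ->; rewrite mulmx1 unitary_adj //; exact: Ufam_unitary.
have -> : \sum_k optr (opmul rho (X k)) = optr (opmul rho (fun x y => \sum_k X k x y)).
  rewrite /optr /opmul exchange_big /=; apply: eq_bigr => x _.
  rewrite exchange_big /=; apply: eq_bigr => z _.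
  by rewrite mulr_sumr.
rewrite (@optr_ext _ _ _ _ (opmul rho (fun _ _ => 0))); last first.
  move=> x y; apply: opmul_ext => // x' y'.
  under eq_bigr do rewrite EX.
  by rewrite -mulr_suml family_sum ?mul0r // trace_gm.
rewrite /optr big1 ?mulr0 // => x _; rewrite /opmul big1 // => z _; by rewrite mulr0.
Qed.

End Main.

Theorem mainTheorem14 (R : realType) (n d t : nat) (A : finType)
    (h : A -> op R n d) :
  (1 <= n)%N -> (2 <= d)%N -> (1 <= t)%N ->
  (forall al, op_hermitian (h al)) ->
  (forall al (U : 'M[R[i]]_d), unitary_mx U ->
     forall x y, opmul (opmul (tenspow U) (h al)) (tenspow (adjmx U)) x y
                 = h al x y) ->
  forall rho : op R n d, is_pseudo_density t rho ->
  exists rho' : op R n d,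
    [/\ is_pseudo_density t rho',
        is_density rho -> is_density rho',
        (forall (a : 'I_d * 'I_d) (u : 'I_n), ~~ is_id_label a ->
           optr (opmul rho' (local_gm R a u)) = 0)
      & (forall al, optr (opmul rho' (h al)) = optr (opmul rho (h al)))].
Proof.
case: d h => [|[|d']] h _ // _ _ _ Hh rho prho.
have hU := @Ufam_unitary R d'.
have K0 := @Kt_pos d'.
exists (twirl (@Ufam R d') rho); split.
- apply: twirl_psd => // k B dB.
  exact: deg_conj (hU k) dB.
- exact: twirl_density.
- move=> a u nid; exact: local_zero.
- move=> al; apply: twirl_inv => //; exact: Hh.
Qed.
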